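(* In the rationalizable model, consider the following principal algorithm: for each agent $i=1,\dots,n$ and each opponent profile $a_{-i}\in A_{-i}$, the principal runs the single-agent binary-search procedure on agent $i$ (for each $a_i\in A_i$, use $\mathcal{O}(\log(1/\varepsilon))$ binary-search rounds to approximate to precision $\varepsilon$ the smallest $P^*(a_i)\in[0,1]$ such that agent $i$ plays $a_i$ when paid $P^*(a_i)$ on $a_i$ and $0$ on its other actions, and set $\tilde U_i(a_i,a_{-i}):=-P^*(a_i)$), while during these rounds paying every other agent $j\ne i$ according to $P_j^t(a_j')=2\cdot\mathbb{1}[a_j'=a_j]$, where $a_j$ is agent $j$'s action in $a_{-i}$; finally it outputs $\tilde U$. This algorithm $\varepsilon$-learns any game in $\mathcal{O}(nM\log(1/\varepsilon))$ rounds.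
   Context: A normal-form game has agents $i\in[n]$, finite action sets $A_i$ with $|A_i|=m_i\ge2$, $A=A_1\times\dots\times A_n$, $M=\prod_i m_i$, and utilities $U_i:A\to[0,1]$. The game is played over rounds $t=1,2,\dots$: the principal chooses payment functions $P_i^t:A_i\to\mathbb{R}_+$, creating the game $\Gamma^t$ with utilities $U_i^t(a)=U_i(a)+P_i^t(a_i)$; agents simultaneously choose actions $a_i^t$; the principal observes $a^t$. The principal initially knows only the action sets and that utilities lie in $[0,1]$. Rationalizable model: in each round each agent plays an action that survives iterated elimination of strictly dominated actions in $\Gamma^t$ (an action $a_i$ is strictly dominated if some mixed strategy $x_i\in\Delta(A_i)$ satisfies $U_i^t(x_i,a_{-i})>U_i^t(a_i,a_{-i})$ for all $a_{-i}$). The principal $\varepsilon$-learns the game if it outputs $\tilde U_i:A\to\mathbb{R}$ such that there exist $W_i:A_{-i}\to\mathbb{R}$ with $|U_i(a)+W_i(a_{-i})-\tilde U_i(a)|\le\varepsilon$ for all $i$ and $a\in A$. *)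

(* Defs.v *)
From HB Require Import structures.
From mathcomp Require Import all_boot all_order all_algebra.
From mathcomp Require Import reals exp.
Unset Printing Implicit Defensive.
Import Order.TTheory GRing.Theory Num.Theory.
Local Open Scope ring_scope.

Section Games.
Variable R : realType.
Variable n : nat.
Variable m : 'I_n -> nat.

Definition profile := {dffun forall i : 'I_n, 'I_(m i)}.

(* (c, a_{-i}) : replace the i-th coordinate of a by c *)
Definition upd (a : profile) (i : 'I_n) (c : 'I_(m i)) : profile :=
  @finfun _ (fun j => 'I_(m j)) (@dfwith _ (fun j => 'I_(m j)) (fun j => a j) i c).

Definition utilities := forall i : 'I_n, profile -> R.
Definition payments := forall i : 'I_n, 'I_(m i) -> R.

Definition with_pay (U : utilities) (P : payments) : utilities :=
  fun i a => U i a + P i (a i).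

Definition dominated (G : utilities) (S : forall i : 'I_n, 'I_(m i) -> Prop)
    (i : 'I_n) (b : 'I_(m i)) : Prop :=
  exists x : 'I_(m i) -> R,
    [/\ (forall c, 0 <= x c), \sum_(c : 'I_(m i)) x c = 1,
        (forall c, ~ S i c -> x c = 0) &
        forall a : profile, (forall j, j != i -> S j (a j)) ->
          G i (upd a i b) < \sum_(c : 'I_(m i)) x c * G i (upd a i c)].

(* surviving actions after k rounds of (simultaneous) iterated elimination of
   strictly dominated actions *)
Fixpoint surv (G : utilities) (k : nat) : forall i : 'I_n, 'I_(m i) -> Prop :=
  match k with
  | 0 => fun _ _ => True
  | k'.+1 => fun i b => surv G k' i b /\ ~ dominated G (surv G k') i b
  end.

Definition rationalizable (G : utilities) (a : profile) : Prop :=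
  forall (i : 'I_n) (k : nat), surv G k i (a i).

(* Interactive principal algorithms: in each round the principal posts
   payments and observes the resulting action profile, or it stops and
   outputs an estimate Ut of the utilities. *)
Inductive principal : Type :=
  | Query of payments & (profile -> principal)
  | Output of utilities.

Definition history := seq (payments * profile).

(* Agent behaviour: (possibly history dependent, adversarial) choice of the
   action profile played in the posted game. *)
Definition behaviour := history -> payments -> profile.

Definition rational_behaviour (U : utilities) (beh : behaviour) : Prop :=
  forall (h : history) (P : payments), rationalizable (with_pay U P) (beh h P).

Fixpoint exec (p : principal) (beh : behaviour) (h : history)
    : nat * utilities :=
  match p with
  | Output Ut => (0%N, Ut)
  | Query P k =>
      let a := beh h P in
      let r := exec (k a) beh (rcons h (P, a)) in (r.1.+1, r.2)
  end.

(* eps-learning: exists W_i depending only on a_{-i} *)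
Definition eps_learns (U Ut : utilities) (eps : R) : Prop :=
  exists W : utilities,
    (forall (i : 'I_n) (a : profile) (c : 'I_(m i)), W i (upd a i c) = W i a) /\
    (forall (i : 'I_n) (a : profile), `|U i a + W i a - Ut i a| <= eps).

Definition utilities_in01 (U : utilities) : Prop :=
  forall i a, 0 <= U i a <= 1.

Definition pay_for (i : 'I_n) (a : profile) (p : R) : payments :=
  fun j b => if b == a j then (if j == i then p else 2) else 0.

(* K rounds of binary search on [lo, hi] for the threshold payment P-star(a_i);
   the continuation receives the final upper end , i.e. the estimate of P-star *)
Fixpoint bsearch (K : nat) (i : 'I_n) (a : profile) (lo hi : R)
    (cont : R -> principal) : principal :=
  match K with
  | 0 => cont hi
  | K'.+1 =>
      let mid := (lo + hi) / 2 in
      Query (pay_for i a mid)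
        (fun b => if b i == a i then bsearch K' i a lo mid cont
                  else bsearch K' i a mid hi cont)
  end.

Definition est_upd (est : utilities) (i : 'I_n) (a : profile) (p : R)
    : utilities :=
  fun j b => if (j == i) && (b == a) then p else est j b.

Fixpoint run_all (K : nat) (l : seq ('I_n * profile)) (est : utilities)
    : principal :=
  match l with
  | [::] => Output (fun j b => - est j b)
  | (i, a) :: l' => bsearch K i a 0 1 (fun p => run_all K l' (est_upd est i a p))
  end.

(* number of binary search rounds: K = floor(log2(1/eps)) + 1, so 2^-K <= eps *)
Definition nsteps (eps : R) : nat := (Num.truncn (ln (eps^-1) / ln 2)).+1.

Definition algorithm (eps : R) : principal :=
  run_all (nsteps eps) [seq (i, a) | i <- enum 'I_n, a <- enum {: profile}]
    (fun _ _ => 0).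

End Games.

Arguments utilities_in01 {R n m}.
Arguments rational_behaviour {R n m}.
Arguments eps_learns {R n m}.
Arguments exec {R n m}.

(* Main.v *)
Require Import Defs.
From HB Require Import structures.
From mathcomp Require Import all_boot all_order all_algebra.
From mathcomp Require Import reals exp sequences.
From mathcomp Require Import ring lra.
Import Order.TTheory GRing.Theory Num.Theory.
Local Open Scope ring_scope.
Section NumS.
Variable R : realType.

Lemma ln2_ge : (1/2 : R) <= ln 2.
Proof.
have h := expR_ge1Dx (- (1/2) : R).
rewrite expRN in h.
have p : 0 < expR (1/2 : R) by rewrite expR_gt0.
have e2 : expR (1/2 : R) <= 2.
  set y := (expR (1/2 : R))^-1 in h *. have Hy : expR (1/2 : R) * y = 1 by rewrite mulfV // gt_eqF.
  clearbody y. move: p Hy h; set e := expR _ => p Hy h. clearbody e. nra.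
rewrite -(expRK (1/2 : R)) ler_ln ?posrE //.
Qed.

Lemma nsteps_bound (eps : R) : 0 < eps < 1 ->
  ((nsteps R eps)%:R <= 2 * (1 + ln (eps^-1))) /\ (2^+(nsteps R eps))^-1 <= eps.
Proof.
case/andP=> e0 e1.
have l0 : 0 < ln (eps^-1) by apply: ln_gt0; rewrite invf_gt1 //; lra.
have l2 := ln2_ge.
have l2p : 0 < ln (2:R) by lra.
set x := ln (eps^-1) / ln 2.
have x0 : 0 <= x by rewrite /x divr_ge0 // ltW.
have [t1 t2] := andP (truncn_itv x0).
have hx : x <= 2 * ln (eps^-1).
  rewrite /x ler_pdivrMr //. nra.
split.
  rewrite /nsteps -/x -addn1 natrD; lra.
rewrite /nsteps -/x.
have h3 : ln (eps^-1) < (Num.truncn x).+1%:R * ln 2 by rewrite -ltr_pdivrMr.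
have h2 : eps^-1 < 2 ^+ (Num.truncn x).+1.
  rewrite -ltr_ln ?posrE ?invr_gt0 ?exprn_gt0 // lnXn // -[ln 2 *+ _]mulr_natl.
  exact: h3.
rewrite -[X in _ <= X](invrK eps) lef_pV2 ?posrE ?invr_gt0 ?exprn_gt0 //; exact: ltW.
Qed.
End NumS.
Section Game.
Variables (R : realType) (n : nat) (m : 'I_n -> nat).
Local Notation profile := (profile n m).
Local Notation upd := (@upd n m).
Local Notation utilities := (utilities R n m).
Local Notation with_pay := (@with_pay R n m).
Local Notation pay_for := (@pay_for R n m).
Local Notation surv := (@surv R n m).
Local Notation dominated := (@dominated R n m).
Local Notation rationalizable := (@rationalizable R n m).

Lemma upd_at (a : profile) i c : upd a i c i = c.
Proof. by rewrite /upd ffunE dfwith_in. Qed.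

Lemma upd_out (a : profile) i c j : j != i -> upd a i c j = a j.
Proof. by move=> ji; rewrite /upd ffunE dfwith_out // eq_sym. Qed.

Lemma upd_agree (a a' : profile) i c :
  (forall j, j != i -> a' j = a j) -> upd a' i c = upd a i c.
Proof.
move=> H; apply/ffunP => j; case: (eqVneq j i) => [->|ji].
  by rewrite !upd_at.
by rewrite !upd_out // H.
Qed.

Lemma upd_upd (a : profile) i c d : upd (upd a i c) i d = upd a i d.
Proof. by apply: upd_agree => j ji; rewrite upd_out. Qed.

Lemma upd_self (a : profile) i : upd a i (a i) = a.
Proof.
apply/ffunP => j; case: (eqVneq j i) => [->|ji].
  by rewrite upd_at.
by rewrite upd_out.
Qed.

Lemma upd_self' (a : profile) i c : c = a i -> upd a i c = a.
Proof. by move=> ->; exact: upd_self. Qed.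

Lemma sum_ind (T : finType) (d : T) (f : T -> R) :
  \sum_(c : T) (if c == d then 1 else 0) * f c = f d.
Proof.
rewrite (bigD1 d) //= eqxx mul1r big1 ?addr0 // => c /negbTE ->.
by rewrite mul0r.
Qed.

Lemma sum_ind1 (T : finType) (d : T) :
  \sum_(c : T) (if c == d then 1 else 0 : R) = 1.
Proof.
rewrite -[RHS](@sum_ind T d (fun _ => 1)); apply: eq_bigr => c _; by rewrite mulr1.
Qed.

Lemma exists_max (T : finType) (x0 : T) (f : T -> R) :
  exists c, forall d, f d <= f c.
Proof.
case: (@Order.TotalTheory.arg_maxP _ R T x0 xpredT f isT) => c _ H; exists c => d; exact: H.
Qed.



Lemma best_resp (U : utilities) (Uin : utilities_in01 U) i (a : profile) p
  (b : profile) :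
  rationalizable (with_pay U (pay_for i a p)) b ->
  forall c, with_pay U (pay_for i a p) i (upd a i c)
            <= with_pay U (pay_for i a p) i (upd a i (b i)).
Proof.
set G := with_pay U (pay_for i a p) => Hb.
have [c0 Hc0] := exists_max _ (b i) (fun c => G i (upd a i c)).
have opp : forall j d, j != i -> d != a j -> ~ surv G 1 j d.
  move=> j d ji da [_]; apply.
  exists (fun c => if c == a j then 1 else 0); split.
  - by move=> c; case: ifP.
  - exact: sum_ind1.
  - by [].
  move=> a' _; rewrite sum_ind /G /with_pay /pay_for !upd_at eqxx (negbTE da).
  rewrite (negbTE ji).
  have := Uin j (upd a' j d); have := Uin j (upd a' j (a j)).
  case/andP=> h1 h2; case/andP=> h3 h4; lra.
have c0s : surv G 1 i c0.
  split => //; case=> x [x0 x1 _ xd].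
  have := xd a (fun _ _ => I).
  apply/negP; rewrite -leNgt.
  apply: (@le_trans _ _ (\sum_c x c * G i (upd a i c0))).
    apply: ler_sum => c _; apply: ler_wpM2l => //; exact: Hc0.
  by rewrite -mulr_suml x1 mul1r.
move=> c; rewrite leNgt; apply/negP => Hlt.
have := Hb i 2%N; case=> _; apply.
exists (fun c => if c == c0 then 1 else 0); split.
- by move=> c'; case: ifP.
- exact: sum_ind1.
- by move=> c' Hc'; case: eqP => // E; rewrite E in Hc'.
move=> a' Ha'.
have Ea : forall d, upd a' i d = upd a i d.
  move=> d; apply: upd_agree => j ji.
  case: (eqVneq (a' j) (a j)) => // ne.
  by case: (opp j (a' j) ji ne (Ha' j ji)).
rewrite Ea (eq_bigr (fun c => (if c == c0 then 1 else 0) * G i (upd a i c))); last by move=> c' _; rewrite Ea.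
rewrite sum_ind; apply: (lt_le_trans Hlt); exact: Hc0.
Qed.


Lemma half_step (x y : R) K :
  ((x + y) / 2 - x) / 2 ^+ K = (y - x) / 2 ^+ K.+1 /\
  (y - (x + y) / 2) / 2 ^+ K = (y - x) / 2 ^+ K.+1.
Proof.
have e1 : (x + y) / 2 - x = (y - x) / 2 by lra.
have e2 : y - (x + y) / 2 = (y - x) / 2 by lra.
by rewrite e1 e2 exprS invfM mulrA.
Qed.

Lemma bsearch_spec (U : utilities) (Uin : utilities_in01 U)
  (beh : behaviour R n m) (Hbeh : rational_behaviour U beh) i (a : profile) D
  (HD1 : forall c, U i (upd a i c) <= U i a + D)
  (HD2 : exists c, U i a + D <= U i (upd a i c)) K :
  forall lo hi (cont : R -> principal R n m) h,
  0 <= lo -> hi <= 1 -> lo <= D -> D <= hi ->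
  exists hi' h', exec (bsearch R n m K i a lo hi cont) beh h =
     (((exec (cont hi') beh h').1 + K)%N, (exec (cont hi') beh h').2) /\
     D <= hi' /\ hi' - D <= (hi - lo) / 2 ^+ K.
Proof.
elim: K => [|K IH] lo hi cont h lo0 hi1 loD Dhi.
  exists hi, h; split; first by rewrite /= addn0; case: exec.
  by split => //; rewrite expr0 divr1; lra.
rewrite /=.
set mid := (lo + hi) / 2.
set P := pay_for i a mid.
have Hr := @best_resp U Uin i a mid _ (Hbeh h P).
have [hs1 hs2] := half_step lo hi K.
have Ua i' c : with_pay U P i (upd a i' c) = U i (upd a i' c) + P i (upd a i' c i).
  by [].
case: eqP => [E|NE].
  have midD : D <= mid.
    have [c Hc] := HD2; have := Hr c; rewrite (@upd_self' a i _ E) /with_pay /P /pay_for.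
    rewrite upd_at !eqxx; case: eqP => [ce|_].
      by rewrite (@upd_self' a i c ce) in Hc; rewrite /mid; lra.
    lra.
  have [hi' [h' [Eq [D1 D2]]]] := IH lo mid cont (rcons h (P, beh h P))
    lo0 ltac:(rewrite /mid; lra) loD midD.
  exists hi', h'; rewrite Eq addnS; split => //; split => //.
  by rewrite -hs1.
have midD : mid <= D.
  have := Hr (a i); rewrite upd_self /with_pay /P /pay_for upd_at !eqxx.
  have NE' : (beh h P i == a i) = false by apply/eqP.
  rewrite NE'; have := HD1 (beh h P i); lra.
have [hi' [h' [Eq [D1 D2]]]] := IH mid hi cont (rcons h (P, beh h P))
  ltac:(rewrite /mid; lra) hi1 midD Dhi.
exists hi', h'; rewrite Eq addnS; split => //; split => //.
by rewrite -hs2.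
Qed.


Definition amax (U : utilities) j (b : profile) : 'I_(m j) :=
  Order.arg_max (b j) xpredT (fun c => U j (upd b j c)).
Definition Mx (U : utilities) j (b : profile) := U j (upd b j (amax U j b)).

Lemma Mx_ge U j b d : U j (upd b j d) <= Mx U j b.
Proof.
rewrite /Mx /amax.
by case: (@Order.TotalTheory.arg_maxP _ R _ (b j) xpredT (fun c => U j (upd b j c)) isT) => c _ H; exact: H.
Qed.

Lemma Mx_upd U j b c : Mx U j (upd b j c) = Mx U j b.
Proof.
apply/le_anti/andP; split.
  by rewrite {1}/Mx upd_upd; exact: Mx_ge.
by rewrite {1}/Mx -(upd_upd b j c); exact: Mx_ge.
Qed.

Lemma run_all_spec (U : utilities) (Uin : utilities_in01 U)
  (beh : behaviour R n m) (Hbeh : rational_behaviour U beh) eps K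
  (HK : (2 ^+ K)^-1 <= eps) :
  forall l est h,
  (forall j b, (j, b) \notin l -> `|U j b - Mx U j b + est j b| <= eps) ->
  (exec (run_all R n m K l est) beh h).1 = (size l * K)%N /\
  forall j b, `|U j b + - Mx U j b - (exec (run_all R n m K l est) beh h).2 j b| <= eps.
Proof.
elim=> [|[i a] l IH] est h Hest.
  split => //= j b; rewrite opprK; exact: Hest.
rewrite /=.
have HD1 : forall c, U i (upd a i c) <= U i a + (Mx U i a - U i a).
  by move=> c; rewrite addrC subrK; exact: Mx_ge.
have HD2 : exists c, U i a + (Mx U i a - U i a) <= U i (upd a i c).
  by exists (amax U i a); rewrite addrC subrK.
have D0 : 0 <= Mx U i a - U i a.
  by have := Mx_ge U i a (a i); rewrite upd_self subr_ge0.
have D1' : Mx U i a - U i a <= 1.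
  have := Uin i (upd a i (amax U i a)); have := Uin i a.
  rewrite /Mx; case/andP => h1 h2; case/andP => h3 h4; lra.
have [hi' [h' [Eq [E1 E2]]]] := @bsearch_spec U Uin beh Hbeh i a _ HD1 HD2 K 0 1
  (fun p => run_all R n m K l (est_upd R n m est i a p)) h (lexx 0) (lexx 1) D0 D1'.
rewrite Eq /=.
have Hest' : forall j b, (j, b) \notin l ->
    `|U j b - Mx U j b + est_upd R n m est i a hi' j b| <= eps.
  move=> j b Hjb; rewrite /est_upd; case: eqP => [ji|nji] /=.
    case: eqP => [ba|nba] /=.
      subst j b; move: E2; rewrite subr0 div1r => E2.
      move: (2 ^- K) E2 HK => t E2 HK'.
      rewrite ger0_norm; lra.
    apply: Hest; rewrite in_cons negb_or Hjb andbT xpair_eqE.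
    apply/negP => /andP [_ /eqP ba]; exact: nba ba.
  apply: Hest; rewrite in_cons negb_or Hjb andbT xpair_eqE.
  apply/negP => /andP [/eqP ji _]; exact: nji ji.
have [IH1 IH2] := IH (est_upd R n m est i a hi') h' Hest'.
split; first by rewrite IH1 mulSn addnC.
exact: IH2.
Qed.

End Game.

Lemma foldr_prod (T : Type) (f : T -> nat) (s : seq T) :
  foldr muln 1%N (map f s) = (\prod_(i <- s) f i)%N.
Proof. by elim: s => [|x s IH]; rewrite ?big_nil ?big_cons //= IH. Qed.

Lemma card_profile n (m : 'I_n -> nat) : #|{: profile n m}| = (\prod_(i < n) m i)%N.
Proof.
rewrite card_dep_ffun foldr_prod big_enum /=.
by apply: eq_bigr => i _; rewrite card_ord.
Qed.

Theorem theorem4p2 (R : realType) :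
  exists C : R, 0 < C /\
  forall (n : nat) (m : 'I_n -> nat), (forall i, 2 <= m i)%N ->
  forall eps : R, 0 < eps < 1 ->
  forall (U : utilities R n m), utilities_in01 U ->
  forall beh : behaviour R n m, rational_behaviour U beh ->
  let res := exec (algorithm R n m eps) beh [::] in
  eps_learns U res.2 eps /\
  (res.1)%:R <= C * n%:R * (\prod_(i < n) m i)%:R * (1 + ln (eps^-1)).
Proof.
exists 2; split => // n m Hm eps Heps U Uin beh Hbeh res.
have [HK1 HK2] := @nsteps_bound R eps Heps.
set l := [seq (i, a) | i <- enum 'I_n, a <- enum {: profile n m}].
have Hl : forall j b, (j, b) \notin l -> `|U j b - Mx R n m U j b + 0| <= eps.
  move=> j b; rewrite /l; move/negP; case.
  by apply: (allpairs_f pair); rewrite mem_enum.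
have [E1 E2] := @run_all_spec R n m U Uin beh Hbeh eps _ HK2 l (fun _ _ => 0) [::] Hl.
have Ealg : algorithm R n m eps = run_all R n m (nsteps R eps) l (fun _ _ => 0) by [].
rewrite /res Ealg.
split.
  exists (fun j b => - Mx R n m U j b); split.
    by move=> i a c; rewrite Mx_upd.
  move=> j b; exact: E2.
rewrite E1 size_allpairs size_enum_ord -cardE card_profile.
rewrite !natrM.
have l0 : 0 <= ln (eps^-1).
  apply: ln_ge0; case/andP: Heps => e0 e1; rewrite invf_ge1 //; lra.
move: HK1 l0; move: (ln eps^-1) ((nsteps R eps)%:R) => L k HK1 l0.
have hn : 0 <= (n%:R : R) * (\prod_(i < n) m i)%:R by apply: mulr_ge0.
move: hn; move: (\prod_(i < n) m i)%:R (n%:R : R) => P N hn.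
have -> : 2 * N * P * (1 + L) = N * P * (2 * (1 + L)) by ring.
exact: ler_wpM2l.
Qed.
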